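(* Up to natural isomorphism, the external tensor product $$\boxtimes:\mathrm{Fam}_{\mathbb{C}}\times\mathrm{Fam}_{\mathbb{C}}\to\mathrm{Fam}_{\mathbb{C}},\qquad (\mathscr V_X\boxtimes\mathscr V'_{X'})_{(x,x')}:=\mathscr V_x\otimes_{\mathbb C}\mathscr V'_{x'}$$ (over the base $X\times X'$, acting on morphisms by $(\phi_f,\phi'_{f'})\mapsto(\phi_x\otimes\phi'_{x'})_{f\times f'}$) is the unique functor $F:\mathrm{Fam}_{\mathbb{C}}\times\mathrm{Fam}_{\mathbb{C}}\to\mathrm{Fam}_{\mathbb{C}}$ such that: (i) $F$ distributes over set-indexed coproducts in each variable separately, i.e. for every set $I$, every family $(A_i)_{i\in I}$ and every object $B$, the canonical comparison maps $\coprod_i F(A_i,B)\to F(\coprod_i A_i,B)$ and $\coprod_i F(B,A_i)\to F(B,\coprod_i A_i)$ are isomorphisms; and (ii) restricted along $\iota\times\iota$ it agrees (up to natural isomorphism) with the ordinary tensor product, i.e. $F(\iota\mathscr V,\iota\mathscr W)\cong\iota(\mathscr V\otimes_{\mathbb C}\mathscr W)$ naturally in $\mathscr V,\mathscr W\in\mathrm{Mod}_{\mathbb C}$.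
   Context: $\mathrm{Mod}_{\mathbb C}$ is the category of complex vector spaces and linear maps. $\mathrm{Fam}_{\mathbb C}$ (''vector bundles over discrete spaces'') is the category whose objects $\mathscr V_X$ are pairs of a set $X$ and a family $(\mathscr V_x)_{x\in X}$ of complex vector spaces (equivalently a functor from the discrete category $X$ to $\mathrm{Mod}_{\mathbb C}$), and whose morphisms $\phi_f:\mathscr V_X\to\mathscr W_Y$ are pairs of a function $f:X\to Y$ and linear maps $\phi_x:\mathscr V_x\to\mathscr W_{f(x)}$ for all $x\in X$; composition is the evident one. Coproducts in $\mathrm{Fam}_{\mathbb C}$ are given by disjoint union of base sets with the fibers over each component unchanged. The functor $\iota:\mathrm{Mod}_{\mathbb C}\hookrightarrow\mathrm{Fam}_{\mathbb C}$ sends $\mathscr V$ to the family over the singleton set with fiber $\mathscr V$. *)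

(* Defs.v *)
From HB Require Import structures.
From mathcomp Require Import all_boot all_order all_algebra.
From mathcomp Require Import boolp classical_sets functions.
From mathcomp Require Import complex.
From mathcomp Require Import Rstruct.

Set Implicit Arguments.
Unset Strict Implicit.
Unset Printing Implicit Defensive.

Import GRing.Theory.
Local Open Scope ring_scope.

Notation CC := (complex Rdefinitions.R).

(* Mod_C : objects are complex vector spaces [lmodType CC], morphisms  *)
(* are linear maps [{linear V -> W}].                                  *)

(* Model: V (x) W is the subspace of the (algebraic) dual of the space *)
(* of bilinear forms V x W -> C spanned by the evaluations             *)
(* v (x) w := (b |-> b v w).  (Over a field the canonical map from the *)
(* usual quotient construction onto this subspace is an isomorphism.)  *)

Definition is_bilinear (V W : lmodType CC) (b : V -> W -> CC) : Prop :=
  (forall (w : W) (a : CC) (v1 v2 : V), b (a *: v1 + v2) w = a * b v1 w + b v2 w)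
  /\ (forall (v : V) (a : CC) (w1 w2 : W), b v (a *: w1 + w2) = a * b v w1 + b v w2).

Record bilform (V W : lmodType CC) := Bilform {
  bil_fun :> V -> W -> CC;
  bil_is_bilinear : is_bilinear bil_fun }.

Definition tens_pred (V W : lmodType CC) : {pred bilform V W -> CC} :=
  fun phi => `[< exists s : seq (CC * V * W),
      phi = fun b => \sum_(t <- s) t.1.1 * b t.1.2 t.2 >].
Arguments tens_pred : clear implicits.

Lemma tens_pred_submod_closed (V W : lmodType CC) :
  GRing.submod_closed (tens_pred V W).
Proof.
split.
  apply/asboolP; exists [::]; apply/funext => b /=.
  by rewrite big_nil.
move=> a u v /asboolP [su ->] /asboolP [sv ->]; apply/asboolP.
exists ([seq (a * t.1.1, t.1.2, t.2) | t <- su] ++ sv).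
apply/funext => b /=; rewrite big_cat big_map /=.
congr (_ + _).
transitivity (a * \sum_(t <- su) t.1.1 * b t.1.2 t.2); first by [].
rewrite mulr_sumr.
by apply: eq_bigr => t _; rewrite -mulrA.
Qed.

HB.instance Definition _ (V W : lmodType CC) :=
  GRing.isSubmodClosed.Build CC (bilform V W -> CC) (tens_pred V W) (tens_pred_submod_closed V W).

Definition tensT (V W : lmodType CC) := {phi : bilform V W -> CC | phi \in tens_pred V W}.

HB.instance Definition _ (V W : lmodType CC) := [isSub for @sval _ _ : tensT V W -> _].
HB.instance Definition _ (V W : lmodType CC) := [Choice of tensT V W by <:].
HB.instance Definition _ (V W : lmodType CC) :=
  [SubChoice_isSubLmodule of tensT V W by <:].

Definition tensor (V W : lmodType CC) : lmodType CC := tensT V W.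

Definition bil_comp_fun (V W V' W' : lmodType CC) (f : {linear V -> V'})
  (g : {linear W -> W'}) (b : bilform V' W') : V -> W -> CC :=
  fun v w => b (f v) (g w).

Lemma bil_comp_is_bilinear (V W V' W' : lmodType CC) (f : {linear V -> V'})
  (g : {linear W -> W'}) (b : bilform V' W') : is_bilinear (bil_comp_fun f g b).
Proof.
case: b => b [bl br]; rewrite /bil_comp_fun /=; split.
  by move=> w a v1 v2; rewrite linearP bl.
by move=> v a w1 w2; rewrite linearP br.
Qed.

Definition bil_comp (V W V' W' : lmodType CC) (f : {linear V -> V'})
  (g : {linear W -> W'}) (b : bilform V' W') : bilform V W :=
  Bilform (bil_comp_is_bilinear f g b).

Lemma tmap_subproof (V W V' W' : lmodType CC) (f : {linear V -> V'})
  (g : {linear W -> W'}) (t : tensor V W) :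
  (fun b => val t (bil_comp f g b)) \in tens_pred V' W'.
Proof.
case: t => phi /= /asboolP [s ->]; apply/asboolP.
exists [seq (x.1.1, f x.1.2, g x.2) | x <- s].
by apply/funext => b /=; rewrite big_map.
Qed.

Definition tmap_fun (V W V' W' : lmodType CC) (f : {linear V -> V'})
  (g : {linear W -> W'}) (t : tensor V W) : tensor V' W' :=
  exist (fun phi => phi \in tens_pred V' W') _ (tmap_subproof f g t).

Lemma tmap_is_linear (V W V' W' : lmodType CC) (f : {linear V -> V'})
  (g : {linear W -> W'}) : linear (tmap_fun f g).
Proof. by move=> a t1 t2; apply: val_inj; apply/funext => b. Qed.

HB.instance Definition _ (V W V' W' : lmodType CC) (f : {linear V -> V'})
  (g : {linear W -> W'}) :=
  GRing.isLinear.Build CC (tensor V W) (tensor V' W') _ (tmap_fun f g)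
    (tmap_is_linear f g).

Definition tmap (V W V' W' : lmodType CC) (f : {linear V -> V'})
  (g : {linear W -> W'}) : {linear tensor V W -> tensor V' W'} := tmap_fun f g.

Record famObj := FamObj {
  fbase : Type;
  ffib : fbase -> lmodType CC }.
Arguments ffib : clear implicits.
Arguments FamObj {fbase} ffib.

Record famHom (A B : famObj) := FamHom {
  hbase : fbase A -> fbase B;
  hfib : forall x : fbase A, {linear ffib A x -> ffib B (hbase x)} }.
Arguments FamHom {A B}.
Arguments hbase {A B}.
Arguments hfib {A B}.

Definition lin_id (V : lmodType CC) : {linear V -> V} := idfun.

Definition famId (A : famObj) : famHom A A :=
  FamHom (fun x => x) (fun x => lin_id (ffib A x)).

Definition lin_comp (U V W : lmodType CC) (g : {linear V -> W}) (f : {linear U -> V})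
  : {linear U -> W} := (g \o f)%FUN.

Definition famComp (A B C : famObj) (g : famHom B C) (f : famHom A B) : famHom A C :=
  FamHom (fun x => hbase g (hbase f x))
         (fun x => lin_comp (hfib g (hbase f x)) (hfib f x)).

Definition famIso (A B : famObj) (f : famHom A B) : Prop :=
  exists g : famHom B A, famComp g f = famId A /\ famComp f g = famId B.

Definition famCoprod (I : Type) (A : I -> famObj) : famObj :=
  FamObj (fun p : {i : I & fbase (A i)} => ffib (A (projT1 p)) (projT2 p)).

Definition famInj (I : Type) (A : I -> famObj) (i : I) : famHom (A i) (famCoprod A) :=
  @FamHom (A i) (famCoprod A) (fun x => existT (fun j => fbase (A j)) i x) (fun x => lin_id (ffib (A i) x)).

Definition famCopair (I : Type) (A : I -> famObj) (D : famObj)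
  (g : forall i, famHom (A i) D) : famHom (famCoprod A) D :=
  @FamHom (famCoprod A) D (fun p => hbase (g (projT1 p)) (projT2 p))
         (fun p => hfib (g (projT1 p)) (projT2 p)).

Definition iotaObj (V : lmodType CC) : famObj := FamObj (fun _ : unit => V).
Definition iotaHom (V W : lmodType CC) (f : {linear V -> W}) :
  famHom (iotaObj V) (iotaObj W) := @FamHom (iotaObj V) (iotaObj W) (fun x => x) (fun _ => f).

Definition Fam2ObjMap := famObj -> famObj -> famObj.
Definition Fam2HomMap (F : Fam2ObjMap) :=
  forall A B A' B', famHom A A' -> famHom B B' -> famHom (F A B) (F A' B').

Definition isFunctor2 (F : Fam2ObjMap) (Fh : Fam2HomMap F) : Prop :=
  (forall A B, Fh A B A B (famId A) (famId B) = famId (F A B)) /\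
  (forall A B A' B' A'' B'' (f : famHom A A') (g : famHom B B')
          (f' : famHom A' A'') (g' : famHom B' B''),
      Fh A B A'' B'' (famComp f' f) (famComp g' g)
      = famComp (Fh A' B' A'' B'' f' g') (Fh A B A' B' f g)).

Definition natIso2 (F : Fam2ObjMap) (Fh : Fam2HomMap F)
                   (G : Fam2ObjMap) (Gh : Fam2HomMap G) : Prop :=
  exists eta : forall A B, famHom (F A B) (G A B),
    (forall A B, famIso (eta A B)) /\
    (forall A B A' B' (f : famHom A A') (g : famHom B B'),
       famComp (eta A' B') (Fh A B A' B' f g) = famComp (Gh A B A' B' f g) (eta A B)).

Definition distributes_coprod (F : Fam2ObjMap) (Fh : Fam2HomMap F) : Prop :=
  forall (I : Type) (A : I -> famObj) (B : famObj),
    famIso (famCopair (fun i => Fh (A i) B (famCoprod A) B (famInj A i) (famId B)))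
    /\ famIso (famCopair (fun i => Fh B (A i) B (famCoprod A) (famId B) (famInj A i))).

Definition restricts_to_tensor (F : Fam2ObjMap) (Fh : Fam2HomMap F) : Prop :=
  exists eta : forall V W : lmodType CC,
      famHom (F (iotaObj V) (iotaObj W)) (iotaObj (tensor V W)),
    (forall V W, famIso (eta V W)) /\
    (forall (V W V' W' : lmodType CC) (f : {linear V -> V'}) (g : {linear W -> W'}),
       famComp (eta V' W') (Fh _ _ _ _ (iotaHom f) (iotaHom g))
       = famComp (iotaHom (tmap f g)) (eta V W)).

Definition boxtimes : Fam2ObjMap := fun A B =>
  FamObj (fun p : fbase A * fbase B => tensor (ffib A p.1) (ffib B p.2)).

Definition boxtimesHom : Fam2HomMap boxtimes := fun A B A' B' f g =>
  @FamHom (boxtimes A B) (boxtimes A' B') (fun p : fbase A * fbase B => (hbase f p.1, hbase g p.2))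
         (fun p => tmap (hfib f p.1) (hfib g p.2)).

(* Main.v *)
Require Import Defs.
From HB Require Import structures.
From mathcomp Require Import all_boot all_order all_algebra.
From mathcomp Require Import boolp classical_sets functions.
From mathcomp Require Import complex.
From mathcomp Require Import Rstruct.
From Stdlib Require Import ProofIrrelevance FunctionalExtensionality ClassicalEpsilon.
Set Implicit Arguments. Unset Strict Implicit. Unset Printing Implicit Defensive.

Lemma lin_eq (U V : lmodType CC) (f g : {linear U -> V}) : f =1 g -> f = g.
Proof.
case: f => f cf; case: g => g cg /= /functional_extensionality E; subst g.
case: cf => [[a1] [s1]]; case: cg => [[a2] [s2]].
by rewrite (proof_irrelevance _ a1 a2) (proof_irrelevance _ s1 s2).
Qed.

Lemma famHom_eq (A B : famObj) (f g : famHom A B) :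
  (forall x, exists e : hbase f x = hbase g x,
     forall v, eq_rect _ (ffib B) (hfib f x v) _ e = hfib g x v) -> f = g.
Proof.
case: f => bf pf; case: g => bg pg /= H.
have E : bf = bg by apply: functional_extensionality => x; case: (H x).
subst bg.
have -> : pf = pg; last by [].
apply: functional_extensionality_dep => x; apply: lin_eq => v.
case: (H x) => e He; rewrite -He.
by rewrite (proof_irrelevance _ e erefl).
Qed.

Lemma famHom_eq_inv (A B : famObj) (f g : famHom A B) : f = g ->
  forall x, exists e : hbase f x = hbase g x,
     forall v, eq_rect _ (ffib B) (hfib f x v) _ e = hfib g x v.
Proof. by move=> -> x; exists erefl. Qed.

Lemma famHom_eq' (A B : famObj) (hb : fbase A -> fbase B)
  (p q : forall x, {linear ffib A x -> ffib B (hb x)}) :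
  (forall x v, p x v = q x v) -> FamHom hb p = FamHom hb q.
Proof. move=> H; apply: famHom_eq => x /=; exists erefl => v /=; exact: H. Qed.
Notation "g \oF f" := (famComp g f) (at level 40, left associativity).

Lemma compA (A B C D : famObj) (h : famHom C D) (g : famHom B C) (f : famHom A B) :
  h \oF (g \oF f) = h \oF g \oF f.
Proof. case: f => bf pf; apply: famHom_eq' => x v //. Qed.

Lemma comp1f (A B : famObj) (f : famHom A B) : famId B \oF f = f.
Proof. case: f => bf pf; apply: famHom_eq' => x v //. Qed.

Lemma compf1 (A B : famObj) (f : famHom A B) : f \oF famId A = f.
Proof. case: f => bf pf; apply: famHom_eq' => x v //. Qed.

Lemma iso_comp (A B C : famObj) (g : famHom B C) (f : famHom A B) :
  famIso f -> famIso g -> famIso (g \oF f).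
Proof.
move=> [f' [f1 f2]] [g' [g1 g2]]; exists (f' \oF g'); split.
  by rewrite compA -(compA f') g1 compf1 f1.
by rewrite compA -(compA g) f2 compf1 g2.
Qed.

Lemma iso_sym (A B : famObj) (f : famHom A B) (g : famHom B A) :
  g \oF f = famId A -> f \oF g = famId B -> famIso g.
Proof. by move=> H1 H2; exists f. Qed.

Definition famInv (A B : famObj) (f : famHom A B) (H : famIso f) : famHom B A :=
  proj1_sig (constructive_indefinite_description _ H).

Lemma famInvK (A B : famObj) (f : famHom A B) (H : famIso f) :
  famInv H \oF f = famId A /\ f \oF famInv H = famId B.
Proof. exact: (proj2_sig (constructive_indefinite_description _ H)). Qed.

Lemma famInv_iso (A B : famObj) (f : famHom A B) (H : famIso f) : famIso (famInv H).
Proof. by case: (famInvK H) => H1 H2; exists f. Qed.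

Lemma Fcomp (F : Fam2ObjMap) (Fh : Fam2HomMap F) (HF : isFunctor2 Fh)
  A B A' B' A'' B'' (f : famHom A A') (g : famHom B B')
          (f' : famHom A' A'') (g' : famHom B' B'') :
  Fh _ _ _ _ f' g' \oF Fh _ _ _ _ f g = Fh _ _ _ _ (f' \oF f) (g' \oF g).
Proof. by case: HF => _ H; rewrite H. Qed.

Lemma Fiso (F : Fam2ObjMap) (Fh : Fam2HomMap F) (HF : isFunctor2 Fh)
  A B A' B' (f : famHom A A') (g : famHom B B') :
  famIso f -> famIso g -> famIso (Fh _ _ _ _ f g).
Proof.
move=> [f' [f1 f2]] [g' [g1 g2]]; exists (Fh _ _ _ _ f' g').
have [H1 _] := HF.
by rewrite !(Fcomp HF) f1 f2 g1 g2 !H1.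
Qed.

Definition coprodMap (I : Type) (C D : I -> famObj) (h : forall i, famHom (C i) (D i)) :
  famHom (famCoprod C) (famCoprod D) :=
  @FamHom (famCoprod C) (famCoprod D)
    (fun p => existT (fun i => fbase (D i)) (projT1 p) (hbase (h (projT1 p)) (projT2 p)))
    (fun p => hfib (h (projT1 p)) (projT2 p)).

Lemma copair_comp (I : Type) (C D : I -> famObj) (E : famObj)
  (g : forall i, famHom (D i) E) (h : forall i, famHom (C i) (D i)) :
  famCopair (fun i => g i \oF h i) = famCopair g \oF coprodMap h.
Proof. by apply: famHom_eq' => x v. Qed.

Lemma copair_inj (I : Type) (C : I -> famObj) (E : famObj)
  (g : forall i, famHom (C i) E) i :
  famCopair g \oF famInj C i = g i.
Proof. by apply: famHom_eq => x; exists erefl. Qed.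

Lemma coprodMap_comp (I : Type) (C D E : I -> famObj)
  (g : forall i, famHom (D i) (E i)) (h : forall i, famHom (C i) (D i)) :
  coprodMap g \oF coprodMap h = coprodMap (fun i => g i \oF h i).
Proof. by apply: famHom_eq' => x v. Qed.

Lemma coprodMap_id (I : Type) (C : I -> famObj) :
  coprodMap (fun i => famId (C i)) = famId (famCoprod C).
Proof. apply: famHom_eq => -[i x] /=; by exists erefl. Qed.

Lemma coprodMap_iso (I : Type) (C D : I -> famObj) (h : forall i, famHom (C i) (D i)) :
  (forall i, famIso (h i)) -> famIso (coprodMap h).
Proof.
move=> H; exists (coprodMap (fun i => famInv (H i))).
rewrite !coprodMap_comp; split.
  have -> : (fun i => famInv (H i) \oF h i) = (fun i => famId (C i)).
    by apply: functional_extensionality_dep => i; case: (famInvK (H i)).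
  exact: coprodMap_id.
have -> : (fun i => h i \oF famInv (H i)) = (fun i => famId (D i)).
  by apply: functional_extensionality_dep => i; case: (famInvK (H i)).
exact: coprodMap_id.
Qed.

Definition pt (A : famObj) (x : fbase A) : famHom (iotaObj (ffib A x)) A :=
  @FamHom (iotaObj (ffib A x)) A (fun _ => x) (fun _ => lin_id (ffib A x)).

Arguments pt : clear implicits.

Definition hat (A : famObj) : famObj := famCoprod (fun x => iotaObj (ffib A x)).

Definition alpha (A : famObj) : famHom (hat A) A := famCopair (fun x => pt A x).

Arguments alpha : clear implicits.

Definition beta (A : famObj) : famHom A (hat A) :=
  @FamHom A (hat A) (fun x => existT (fun x => unit) x tt) (fun x => lin_id (ffib A x)).

Arguments beta : clear implicits.

Lemma alpha_iso (A : famObj) : famIso (alpha A).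
Proof.
exists (beta A); split.
  by apply: famHom_eq => -[x []] /=; exists erefl.
by apply: famHom_eq => x /=; exists erefl.
Qed.

Lemma alpha_inj (A : famObj) x :
  alpha A \oF @famInj _ (fun x => iotaObj (ffib A x)) x = pt A x.
Proof. by apply: famHom_eq => t; exists erefl. Qed.

Lemma comp_pt (A A' : famObj) (f : famHom A A') x :
  f \oF pt A x = pt A' (hbase f x) \oF iotaHom (hfib f x).
Proof. by apply: famHom_eq' => t v. Qed.

Definition epsT (F : Fam2ObjMap) := forall V W : lmodType CC,
  famHom (iotaObj (tensor V W)) (F (iotaObj V) (iotaObj W)).

Definition q (A B : famObj) x y :
  famHom (iotaObj (tensor (ffib A x) (ffib B y))) (boxtimes A B) :=
  @FamHom (iotaObj (tensor (ffib A x) (ffib B y))) (boxtimes A B)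
    (fun _ => (x, y)) (fun _ => lin_id (tensor (ffib A x) (ffib B y))).
Arguments q : clear implicits.

Definition DD (A B : famObj) :=
  famCoprod (fun x => famCoprod (fun y => iotaObj (tensor (ffib A x) (ffib B y)))).

Definition N (A B : famObj) : famHom (boxtimes A B) (DD A B) :=
  @FamHom (boxtimes A B) (DD A B)
    (fun p => existT (fun x => {y : fbase B & unit}) p.1 (existT (fun _ => unit) p.2 tt))
    (fun p => lin_id (tensor (ffib A p.1) (ffib B p.2))).
Arguments N : clear implicits.

Definition Ninv (A B : famObj) : famHom (DD A B) (boxtimes A B) :=
  @FamHom (DD A B) (boxtimes A B)
    (fun p => (projT1 p, projT1 (projT2 p)))
    (fun p => lin_id (tensor (ffib A (projT1 p)) (ffib B (projT1 (projT2 p))))).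

Lemma N_iso A B : famIso (N A B).
Proof.
exists (Ninv A B); split.
  by apply: famHom_eq => -[x y] /=; exists erefl.
by apply: famHom_eq => -[x [y []]] /=; exists erefl.
Qed.

Definition injA (A : famObj) x := @famInj _ (fun x => iotaObj (ffib A x)) x.

Arguments injA : clear implicits.

Definition K (F : Fam2ObjMap) (Fh : Fam2HomMap F) (eps : epsT F) (A B : famObj) x :=
  famCopair (fun y => Fh _ _ _ _ (famId (iotaObj (ffib A x))) (injA B y)
                      \oF eps (ffib A x) (ffib B y)).

Arguments K {F} Fh eps A B x.

Definition M (F : Fam2ObjMap) (Fh : Fam2HomMap F) (eps : epsT F) (A B : famObj) :=
  famCopair (fun x => Fh _ _ _ _ (injA A x) (famId (hat B)) \oF K Fh eps A B x).

Definition theta (F : Fam2ObjMap) (Fh : Fam2HomMap F) (eps : epsT F) (A B : famObj) :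
  famHom (boxtimes A B) (F A B) :=
  Fh _ _ _ _ (alpha A) (alpha B) \oF M Fh eps A B \oF N A B.

Lemma theta_iso (F : Fam2ObjMap) (Fh : Fam2HomMap F) (eps : epsT F)
  (HF : isFunctor2 Fh) (H1 : distributes_coprod Fh) (He : forall V W, famIso (eps V W))
  A B : famIso (theta Fh eps A B).
Proof.
rewrite /theta; apply: iso_comp; first exact: N_iso.
apply: iso_comp; last by apply: (Fiso HF); apply: alpha_iso.
rewrite /M copair_comp; apply: iso_comp; last first.
  exact: (proj1 (H1 _ (fun x => iotaObj (ffib A x)) (hat B))).
apply: coprodMap_iso => x.
rewrite /K copair_comp; apply: iso_comp.
  exact: coprodMap_iso.
exact: (proj2 (H1 _ (fun y => iotaObj (ffib B y)) (iotaObj (ffib A x)))).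
Qed.

Lemma N_q A B x y : N A B \oF q A B x y = 
   @famInj _ (fun x => famCoprod (fun y => iotaObj (tensor (ffib A x) (ffib B y)))) x
   \oF @famInj _ (fun y => iotaObj (tensor (ffib A x) (ffib B y))) y.
Proof. by apply: famHom_eq => -[] /=; exists erefl. Qed.

Lemma M_inj (F : Fam2ObjMap) (Fh : Fam2HomMap F) (eps : epsT F) A B x :
  M Fh eps A B \oF famInj
     (fun x0 : fbase A =>
      famCoprod (fun y0 : fbase B => iotaObj (tensor (ffib A x0) (ffib B y0)))) x
  = Fh _ _ _ _ (injA A x) (famId (hat B)) \oF K Fh eps A B x.
Proof. by apply: famHom_eq => t; exists erefl. Qed.

Lemma K_inj (F : Fam2ObjMap) (Fh : Fam2HomMap F) (eps : epsT F) A B x y :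
  K Fh eps A B x \oF famInj (fun y0 : fbase B => iotaObj (tensor (ffib A x) (ffib B y0))) y
  = Fh _ _ _ _ (famId (iotaObj (ffib A x))) (injA B y) \oF eps (ffib A x) (ffib B y).
Proof. by apply: famHom_eq => t; exists erefl. Qed.

Lemma theta_pt (F : Fam2ObjMap) (Fh : Fam2HomMap F) (eps : epsT F)
  (HF : isFunctor2 Fh) A B x y :
  theta Fh eps A B \oF q A B x y = Fh _ _ _ _ (pt A x) (pt B y) \oF eps _ _.
Proof.
rewrite /theta -compA N_q compA -(compA (Fh _ _ _ _ _ _)).
rewrite M_inj -!compA K_inj !compA (Fcomp HF) (Fcomp HF).
by rewrite !compf1 !alpha_inj.
Qed.

Lemma box_epi A B D (h h' : famHom (boxtimes A B) D) :
  (forall x y, h \oF q A B x y = h' \oF q A B x y) -> h = h'.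
Proof.
move=> H; apply: famHom_eq => -[x y].
have [e He] := famHom_eq_inv (H x y) tt; exists e => v; exact: He v.
Qed.

Lemma box_q A B A' B' (f : famHom A A') (g : famHom B B') x y :
  boxtimesHom f g \oF q A B x y
  = q A' B' (hbase f x) (hbase g y) \oF iotaHom (tmap (hfib f x) (hfib g y)).
Proof. by apply: famHom_eq => t; exists erefl. Qed.

Lemma eps_nat (F : Fam2ObjMap) (Fh : Fam2HomMap F) (eta : forall V W : lmodType CC,
      famHom (F (iotaObj V) (iotaObj W)) (iotaObj (tensor V W)))
  (Hiso : forall V W, famIso (eta V W))
  (Hnat : forall (V W V' W' : lmodType CC) (f : {linear V -> V'}) (g : {linear W -> W'}),
       famComp (eta V' W') (Fh _ _ _ _ (iotaHom f) (iotaHom g))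
       = famComp (iotaHom (tmap f g)) (eta V W))
  (V W V' W' : lmodType CC) (f : {linear V -> V'}) (g : {linear W -> W'}) :
  famInv (Hiso V' W') \oF iotaHom (tmap f g)
  = Fh _ _ _ _ (iotaHom f) (iotaHom g) \oF famInv (Hiso V W).
Proof.
have [a1 a2] := famInvK (Hiso V W).
have [b1 b2] := famInvK (Hiso V' W').
rewrite -[LHS]compf1 -a2 !compA -(compA _ (iotaHom _)) -Hnat compA b1 comp1f.
by [].
Qed.

Lemma theta_nat (F : Fam2ObjMap) (Fh : Fam2HomMap F) (eps : epsT F)
  (HF : isFunctor2 Fh)
  (Heps : forall (V W V' W' : lmodType CC) (f : {linear V -> V'}) (g : {linear W -> W'}),
     eps V' W' \oF iotaHom (tmap f g)
     = Fh _ _ _ _ (iotaHom f) (iotaHom g) \oF eps V W)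
  A B A' B' (f : famHom A A') (g : famHom B B') :
  Fh _ _ _ _ f g \oF theta Fh eps A B = theta Fh eps A' B' \oF boxtimesHom f g.
Proof.
apply: box_epi => x y.
rewrite -compA (theta_pt _ HF) compA (Fcomp HF) !comp_pt -(Fcomp HF) -compA -Heps.
by rewrite -compA box_q compA [RHS]compA (theta_pt _ HF).
Qed.

Lemma nat_inv (X Y X' Y' : famObj) (th : famHom X Y) (th' : famHom X' Y')
  (Fm : famHom Y Y') (Bm : famHom X X') (H : famIso th) (H' : famIso th') :
  Fm \oF th = th' \oF Bm -> famInv H' \oF Fm = Bm \oF famInv H.
Proof.
move=> E; have [a1 a2] := famInvK H; have [b1 b2] := famInvK H'.
by rewrite -[LHS]compf1 -a2 !compA -(compA _ Fm) E compA b1 comp1f.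
Qed.

Lemma uniqueness (F : Fam2ObjMap) (Fh : Fam2HomMap F) :
     isFunctor2 Fh -> distributes_coprod Fh -> restricts_to_tensor Fh ->
     natIso2 Fh boxtimesHom.
Proof.
move=> HF H1 [eta [Hiso Hnat]].
pose eps : epsT F := fun V W => famInv (Hiso V W).
have Heps := eps_nat Hiso Hnat.
have He : forall V W, famIso (eps V W) by move=> V W; apply: famInv_iso.
exists (fun A B => famInv (theta_iso HF H1 He A B)); split.
  by move=> A B; apply: famInv_iso.
move=> A B A' B' f g.
exact: nat_inv (theta_nat HF Heps f g).
Qed.

Lemma bil_eq (V W : lmodType CC) (b1 b2 : bilform V W) :
  (forall v w, b1 v w = b2 v w) -> b1 = b2.
Proof.
case: b1 => f1 p1; case: b2 => f2 p2 /= H.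
have E : f1 = f2 by apply: functional_extensionality => v; apply: functional_extensionality.
subst f2; by rewrite (proof_irrelevance _ p1 p2).
Qed.

Lemma tmap_id_apply (V W : lmodType CC) (t : tensor V W) :
  tmap (lin_id V) (lin_id W) t = t.
Proof.
apply: val_inj => /=; apply: functional_extensionality => b /=.
by congr (sval t); apply: bil_eq.
Qed.

Lemma tmap_comp_apply (U V W U' V' W' : lmodType CC) (f : {linear U -> V}) (f' : {linear V -> W})
  (g : {linear U' -> V'}) (g' : {linear V' -> W'}) t :
  tmap (lin_comp f' f) (lin_comp g' g) t = tmap f' g' (tmap f g t).
Proof.
apply: val_inj => /=; apply: functional_extensionality => b /=.
by congr (sval t); apply: bil_eq.
Qed.

Lemma box_functor : isFunctor2 boxtimesHom.
Proof.
split.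
  move=> A B; apply: famHom_eq => -[x y] /=; exists erefl => v /=.
  exact: tmap_id_apply.
move=> A B A' B' A'' B'' f g f' g'.
apply: famHom_eq => -[x y] /=; exists erefl => v /=.
exact: tmap_comp_apply.
Qed.

Lemma box_distr : distributes_coprod boxtimesHom.
Proof.
move=> I A B; split.
  exists (@FamHom (boxtimes (famCoprod A) B) (famCoprod (fun i => boxtimes (A i) B))
    (fun p => existT (fun i => (fbase (A i) * fbase B)%type) (projT1 p.1) (projT2 p.1, p.2))
    (fun p => lin_id (tensor (ffib (A (projT1 p.1)) (projT2 p.1)) (ffib B p.2)))).
  split.
    apply: famHom_eq => -[i [a b]] /=; exists erefl => v /=.
    exact: tmap_id_apply.
  apply: famHom_eq => -[[i a] b] /=; exists erefl => v /=.
  exact: tmap_id_apply.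
exists (@FamHom (boxtimes B (famCoprod A)) (famCoprod (fun i => boxtimes B (A i)))
  (fun p => existT (fun i => (fbase B * fbase (A i))%type) (projT1 p.2) (p.1, projT2 p.2))
  (fun p => lin_id (tensor (ffib B p.1) (ffib (A (projT1 p.2)) (projT2 p.2))))).
split.
  apply: famHom_eq => -[i [b a]] /=; exists erefl => v /=.
  exact: tmap_id_apply.
apply: famHom_eq => -[b [i a]] /=; exists erefl => v /=.
exact: tmap_id_apply.
Qed.

Lemma box_restr : restricts_to_tensor boxtimesHom.
Proof.
exists (fun V W => @FamHom (boxtimes (iotaObj V) (iotaObj W)) (iotaObj (tensor V W))
   (fun _ => tt) (fun _ => lin_id (tensor V W))).
split.
  move=> V W.
  exists (@FamHom (iotaObj (tensor V W)) (boxtimes (iotaObj V) (iotaObj W))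
   (fun _ => (tt, tt)) (fun _ => lin_id (tensor V W))).
  split.
    by apply: famHom_eq => -[[] []] /=; exists erefl.
  by apply: famHom_eq => -[] /=; exists erefl.
move=> V W V' W' f g.
by apply: famHom_eq => -[[] []] /=; exists erefl.
Qed.

Theorem mainTheorem1 :
  (* the external tensor product is a functor satisfying (i) and (ii) *)
  (isFunctor2 boxtimesHom /\ distributes_coprod boxtimesHom
   /\ restricts_to_tensor boxtimesHom)
  /\
  (* and any functor satisfying (i) and (ii) is naturally isomorphic to it *)
  (forall (F : Fam2ObjMap) (Fh : Fam2HomMap F),
     isFunctor2 Fh -> distributes_coprod Fh -> restricts_to_tensor Fh ->
     natIso2 Fh boxtimesHom).
Proof.
split; last exact: uniqueness.
split; first exact: box_functor.
split; [exact: box_distr | exact: box_restr].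
Qed.
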